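(* A ring $R$ is strongly nil-clean if, and only if, $R$ is GWNC and $R$ is a UU ring.
   Context: All rings are associative with identity. For a ring $S$, $U(S)$, ${\rm Nil}(S)$, ${\rm Id}(S)$ denote units, nilpotents, idempotents. $S$ is GWNC if every $a\in S\setminus U(S)$ can be written as $a=q+e$ or $a=q-e$ with $q\in{\rm Nil}(S)$, $e\in{\rm Id}(S)$. $R$ is strongly nil-clean if every element is $e+b$ with $e$ idempotent, $b$ nilpotent and $eb=be$. $R$ is UU if $U(R)\subseteq 1+{\rm Nil}(R)$. *)

(* Defs.v *)
From mathcomp Require Import all_boot all_algebra.
Set Implicit Arguments. Unset Strict Implicit. Unset Printing Implicit Defensive.
Import GRing.Theory.
Local Open Scope ring_scope.

Definition is_unit (S : pzRingType) (a : S) : Prop :=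
  exists b : S, a * b = 1 /\ b * a = 1.
Definition is_nilpotent (S : pzRingType) (a : S) : Prop :=
  exists n : nat, a ^+ n = 0.
Definition is_idempotent (S : pzRingType) (e : S) : Prop := e * e = e.

Definition GWNC (S : pzRingType) : Prop :=
  forall a : S, ~ is_unit a ->
    exists q e : S, is_nilpotent q /\ is_idempotent e /\ (a = q + e \/ a = q - e).

Definition strongly_nil_clean (R : pzRingType) : Prop :=
  forall a : R, exists e b : R,
    is_idempotent e /\ is_nilpotent b /\ e * b = b * e /\ a = e + b.

Definition UU (R : pzRingType) : Prop :=
  forall u : R, is_unit u -> exists q : R, is_nilpotent q /\ u = 1 + q.

(* Main.v *)
Require Import Defs.
From mathcomp Require Import all_boot all_algebra.
From Stdlib Require Classical_Prop.
Set Implicit Arguments. Unset Strict Implicit. Unset Printing Implicit Defensive.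
Import GRing.Theory.
Local Open Scope ring_scope.


Lemma nilp_comm_mul (R : pzRingType) (x y : R) : GRing.comm x y -> is_nilpotent x -> is_nilpotent (x * y).
Proof. by move=> cxy [n hn]; exists n; rewrite exprMn_comm // hn mul0r. Qed.

Lemma nilp_comm_mulr (R : pzRingType) (x y : R) : GRing.comm x y -> is_nilpotent y -> is_nilpotent (x * y).
Proof. by move=> cxy [n hn]; exists n; rewrite exprMn_comm // hn mulr0. Qed.

Lemma nilpN (R : pzRingType) (x : R) : is_nilpotent x -> is_nilpotent (- x).
Proof. move=> h; rewrite -mulN1r; apply: nilp_comm_mulr => //; exact: commr_sym (commrN1 x). Qed.

Lemma nilpX (R : pzRingType) (x : R) n : is_nilpotent (x ^+ n) -> is_nilpotent x.
Proof. by case=> m hm; exists (n * m)%N; rewrite exprM. Qed.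

Lemma exprS_swap (R : pzRingType) (x y : R) n : (y * x) ^+ n.+1 = y * (x * y) ^+ n * x.
Proof.
elim: n => [|n IH]; first by rewrite expr1 expr0 mulr1.
by rewrite exprS IH [in RHS]exprS !mulrA.
Qed.

Lemma nilp_swap (R : pzRingType) (x y : R) : is_nilpotent (x * y) -> is_nilpotent (y * x).
Proof. by case=> n hn; exists n.+1; rewrite exprS_swap hn mulr0 mul0r. Qed.

Lemma unit_1B_nil (R : pzRingType) (x : R) : is_nilpotent x -> is_unit (1 - x).
Proof.
case=> n hn; exists (\sum_(i < n) x ^+ i).
have h1 : forall m, (1 - x) * \sum_(i < m) x ^+ i = 1 - x ^+ m.
  elim=> [|m IH]; first by rewrite big_ord0 mulr0 expr0 subrr.
  by rewrite big_ord_recr /= mulrDr IH mulrBl mul1r -exprS addrA subrK.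
have h2 : forall m, (\sum_(i < m) x ^+ i) * (1 - x) = 1 - x ^+ m.
  elim=> [|m IH]; first by rewrite big_ord0 mul0r expr0 subrr.
  by rewrite big_ord_recr /= mulrDl IH mulrBr mulr1 -exprSr addrA subrK.
by rewrite h1 h2 hn subr0.
Qed.

Lemma unit_1D_nil (R : pzRingType) (x : R) : is_nilpotent x -> is_unit (1 + x).
Proof. by move=> /nilpN /unit_1B_nil; rewrite opprK. Qed.

Lemma unitM (R : pzRingType) (x y : R) : is_unit x -> is_unit y -> is_unit (x * y).
Proof.
case=> x' [h1 h2] [y' [h3 h4]]; exists (y' * x'); split.
  by rewrite mulrA -(mulrA x) h3 mulr1.
by rewrite mulrA -(mulrA y') h2 mulr1.
Qed.

Lemma comm_inv (R : pzRingType) (u v z : R) : u * v = 1 -> v * u = 1 -> GRing.comm u z -> GRing.comm v z.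
Proof.
move=> h1 h2 c; rewrite /GRing.comm.
by rewrite -[v * z]mulr1 -h1 mulrA -(mulrA v) -c mulrA h2 mul1r.
Qed.


Definition Jr (R : pzRingType) (x : R) := forall s : R, is_nilpotent (s * x).

Lemma uu_nil (R : pzRingType) (hU : UU R) (u : R) : is_unit u -> is_nilpotent (u - 1).
Proof. by move=> /hU [q [hq ->]]; rewrite [1 + q]addrC addrK. Qed.

Lemma two_nil (R : pzRingType) (hU : UU R) : is_nilpotent (2%:R : R).
Proof.
have : is_unit (-1 : R) by exists (-1); rewrite mulrN1 opprK.
move=> /(uu_nil hU) /nilpN; by rewrite opprB opprK.
Qed.

Lemma J_nil (R : pzRingType) (x : R) : Jr x -> is_nilpotent x.
Proof. by move=> /(_ 1); rewrite mul1r. Qed.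

Lemma J_0 (R : pzRingType) : Jr (0 : R).
Proof. by move=> s; exists 1%N; rewrite mulr0 expr1. Qed.

Lemma J_mull (R : pzRingType) (r x : R) : Jr x -> Jr (r * x).
Proof. by move=> h s; rewrite mulrA. Qed.

Lemma J_mulr (R : pzRingType) (x r : R) : Jr x -> Jr (x * r).
Proof. by move=> h s; rewrite mulrA; apply: nilp_swap; rewrite mulrA; apply: h. Qed.

Lemma J_N (R : pzRingType) (x : R) : Jr x -> Jr (- x).
Proof. by move=> h s; rewrite mulrN -mulNr. Qed.

Lemma J_add (R : pzRingType) (hU : UU R) (x y : R) : Jr x -> Jr y -> Jr (x + y).
Proof.
move=> hx hy s.
have [v [h1 h2]] := unit_1B_nil (hx s).
have hu : is_unit ((1 - s * x) * (1 - v * s * y)) by apply: unitM; [exists v | apply: unit_1B_nil; apply: hy].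
have e : (1 - s * x) * (1 - v * s * y) = 1 - s * (x + y).
  by rewrite mulrBr mulr1 !mulrA h1 mul1r mulrDr opprD addrA.
move: hu; rewrite e => /(uu_nil hU); rewrite addrC addKr => /nilpN; by rewrite opprK.
Qed.

Lemma J_B (R : pzRingType) (hU : UU R) (x y : R) : Jr x -> Jr y -> Jr (x - y).
Proof. by move=> hx hy; apply: J_add => //; apply: J_N. Qed.

Lemma J_2 (R : pzRingType) (hU : UU R) (x : R) : Jr (x *+ 2).
Proof.
move=> s; rewrite mulrnAr -mulr_natr; apply: nilp_comm_mulr; first exact: commr_nat.
exact: two_nil.
Qed.

Lemma nil_plus_J (R : pzRingType) (hU : UU R) (x y : R) : is_nilpotent x -> Jr y -> is_nilpotent (x + y).
Proof.
move=> [n hn] hy.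
have H : forall m, Jr ((x + y) ^+ m - x ^+ m).
  elim=> [|m IH]; first by rewrite !expr0 subrr; apply: J_0.
  have -> : (x + y) ^+ m.+1 - x ^+ m.+1 = ((x + y) ^+ m - x ^+ m) * (x + y) + x ^+ m * y.
    by rewrite !exprSr mulrBl [x ^+ m * (x + y)]mulrDr opprD addrA subrK.
  by apply: J_add => //; [apply: J_mulr | apply: J_mull].
by move: (H n); rewrite hn subr0 => /J_nil /nilpX.
Qed.

Lemma lemA (R : pzRingType) (hU : UU R) (e b c : R) :
  e * b = b -> b * e = 0 -> c * e = c -> e * c = 0 -> is_nilpotent (b * c).
Proof.
move=> heb hbe hce hec.
have hbb : b * b = 0 by rewrite -{2}heb mulrA hbe mul0r.
have hcc : c * c = 0 by rewrite -{1}hce -mulrA hec mulr0.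
have xbb : forall X, X * b * b = 0 by move=> X; rewrite -mulrA hbb mulr0.
have xcc : forall X, X * c * c = 0 by move=> X; rewrite -mulrA hcc mulr0.
have hu : is_unit ((1 + b) * (1 + c)).
  by apply: unitM; apply: unit_1D_nil; exists 2%N; rewrite expr2.
have [n hn] := uu_nil hU hu.
set w := (1 + b) * (1 + c) - 1 in hn.
have ew : w = b + c + b * c.
  by rewrite /w mulrDr mulr1 !mulrDl !mul1r addrC -!addrA addKr !addrA.
set z := b * c + c * b.
have k1 : w * w = z * (1 + w).
  rewrite ew /z !mulrDr !mulrDl !mulr1 !mulrA !xbb !xcc hbb hcc !mul0r !addr0 !add0r.
  set m1 := b * c * b; set m2 := c * b * c; set m3 := b * c * b * c; set m4 := b * c; set m5 := c * b.
  by rewrite -!addrA [m1 + _]addrCA addrCA.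
have k2 : z * w = w * z.
  rewrite ew /z !mulrDr !mulrDl !mulrA !xbb !xcc hbb hcc !mul0r !addr0 !add0r.
  set m1 := b * c * b; set m2 := c * b * c; set m3 := b * c * b * c; set m4 := b * c; set m5 := c * b.
  by rewrite -!addrA addrCA [m1 + m3]addrC.
have cz : GRing.comm z (1 + w) by apply: commrD; [exact: commr1 | exact: k2].
have [v [hv1 hv2]] := unit_1D_nil (ex_intro _ n hn : is_nilpotent w).
have hz : z ^+ n = 0.
  have : (z * (1 + w)) ^+ n = 0 by rewrite -k1 exprMn_comm // hn mul0r.
  rewrite exprMn_comm // => h.
  have cv : GRing.comm (1 + w) v by rewrite /GRing.comm hv1 hv2.
  by rewrite -[z ^+ n]mulr1 -(expr1n _ n) -hv1 exprMn_comm // mulrA h mul0r.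
have hbc : (b * c) * (b * c) = z * (b * c).
  by rewrite /z mulrDl [c * b * (b * c)]mulrA -[c * b * b]mulrA hbb mulr0 mul0r addr0.
have hk : forall k, (b * c) ^+ k.+1 = z ^+ k * (b * c).
  elim=> [|k IH]; first by rewrite expr1 expr0 mul1r.
  by rewrite exprSr IH -mulrA hbc mulrA -exprSr.
by exists n.+1; rewrite hk hz mul0r.
Qed.

Lemma idemC (R : pzRingType) (e : R) : is_idempotent e -> is_idempotent (1 - e).
Proof. by rewrite /is_idempotent => h; rewrite mulrBr mulr1 mulrBl mul1r h subrr subr0. Qed.

Lemma lemB (R : pzRingType) (hU : UU R) (e x : R) : is_idempotent e -> Jr (e * x * (1 - e)).
Proof.
rewrite /is_idempotent => he s; apply: nilp_swap.
set b := e * x * (1 - e); set c := (1 - e) * s * e.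
have he' := idemC he; rewrite /is_idempotent in he'.
have e1 : e * (1 - e) = 0 by rewrite mulrBr mulr1 he subrr.
have e2 : (1 - e) * e = 0 by rewrite mulrBl mul1r he subrr.
have xee : forall X, X * e * e = X * e by move=> X; rewrite -mulrA he.
have xff : forall X, X * (1 - e) * (1 - e) = X * (1 - e) by move=> X; rewrite -mulrA he'.
have hbc : is_nilpotent (b * c).
  apply: (lemA hU (e := e)).
  - by rewrite /b !mulrA he.
  - by rewrite /b -mulrA e2 mulr0.
  - by rewrite /c xee.
  - by rewrite /c !mulrA e1 !mul0r.
set m := b * s.
have hm : m * m = (b * c) * m.
  by rewrite /m /b /c !mulrA xff xee.
have hk : forall k, m ^+ k.+1 = (b * c) ^+ k * m.
  elim=> [|k IH]; first by rewrite expr1 expr0 mul1r.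
  by rewrite exprSr IH -mulrA hm mulrA -exprSr.
by case: hbc => n hn; exists n.+1; rewrite hk hn mul0r.
Qed.

Lemma comm_J (R : pzRingType) (hU : UU R) (e q : R) : is_idempotent e -> Jr (q * e - e * q).
Proof.
move=> he.
have -> : q * e - e * q = (1 - e) * q * (1 - (1 - e)) - e * q * (1 - e).
  by rewrite subKr mulrBr mulr1 !mulrBl !mul1r opprB subrKA.
apply: J_B => //; [apply: lemB => //; exact: idemC he | exact: lemB].
Qed.

Lemma sq_nil (R : pzRingType) (hU : UU R) (hG : GWNC R) (a : R) : is_nilpotent (a - a * a).
Proof.
have [q [e [hq [he hae]]]] : exists q e : R, is_nilpotent q /\ is_idempotent e /\ (a = q + e \/ a = q - e).
  case: (Classical_Prop.classic (is_unit a)) => [/hU [q [hq ->]]|/hG //].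
  by exists q, 1; split => //; split; [rewrite /is_idempotent mulr1 | left; rewrite addrC].
have hq1 : is_nilpotent (q * (1 - q)).
  by apply: nilp_comm_mul => //; apply: commrB; [exact: commr1 | by []].
rewrite /is_idempotent in he.
case: hae => ->.
- have -> : q + e - (q + e) * (q + e) = q * (1 - q) + ((q * e - e * q) - (q * e) *+ 2).
    rewrite !mulrDr !mulrDl he mulr1 mulrN mulr2n.
    set A := q * q; set B := e * q; set C := q * e.
    rewrite !opprD -!addrA [- C + - e]addrC [- B + (- e + _)]addrCA [- A + (- e + _)]addrCA addNKr.
    by rewrite [C + (- B + _)]addrCA addNKr.
  apply: nil_plus_J => //; apply: J_B => //; [exact: comm_J | exact: J_2].
- have -> : q - e - (q - e) * (q - e) = q * (1 - q) + ((e * q - q * e) + (q * e - e) *+ 2).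
    rewrite !mulrBr !mulrBl he mulr1 mulr2n.
    set A := q * q; set B := e * q; set C := q * e.
    rewrite !opprD !opprK -!addrA addKr.
    by rewrite [- e + (- A + _)]addrCA [- e + (B + _)]addrCA.
  apply: nil_plus_J => //; apply: J_add => //; last exact: J_2.
  by rewrite -opprB; apply: J_N; exact: comm_J.
Qed.

Lemma pw (R : pzRingType) (b : R) k :
  exists p, b ^+ k.+1 = b + (b - b * b) * p /\ GRing.comm p b.
Proof.
elim: k => [|k [p [hp cp]]].
  by exists 0; rewrite expr1 mulr0 addr0; split => //; apply: commr_sym; apply: commr0.
set t := b - b * b in hp *.
have cbt : GRing.comm b t by apply: commrB => //; apply: commrM.
exists (b * p - 1); split.
  rewrite exprS hp mulrDr mulrA cbt -mulrA mulrBr mulr1 /t.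
  set X := (b - b * b) * (b * p).
  by rewrite opprB addrCA [b * b - b]addrC addNKr addrC.
apply: commr_sym; apply: commrB; last exact: commr1.
by apply: commrM => //; apply: commr_sym.
Qed.

Lemma lift (R : pzRingType) (a : R) : is_nilpotent (a - a * a) ->
  exists e b : R, is_idempotent e /\ is_nilpotent b /\ e * b = b * e /\ a = e + b.
Proof.
case=> N hN; set t := a - a * a in hN.
have ht : t ^+ N.+1 = 0 by rewrite exprSr hN mul0r.
have caa : GRing.comm a a by [].
have ca1 : GRing.comm a (1 - a) by apply: commrB; [exact: commr1 | by []].
have c1a := commr_sym ca1.
have ctp : forall p, GRing.comm p a -> GRing.comm t p.
  by move=> p h; apply: commr_sym; apply: commrB => //; apply: commrM.
have cat : GRing.comm a t by apply: commrB => //; apply: commrM.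
have [p1 [hp1 cp1]] := pw a N.
have [p2 [hp2 cp2]] := pw (1 - a) N.
have et : (1 - a) - (1 - a) * (1 - a) = t.
  by rewrite -{1}[1 - a]mulr1 -mulrBr subKr mulrBl mul1r.
rewrite et in hp2.
have cp2' : GRing.comm p2 a.
  have : GRing.comm p2 (1 - (1 - a)) by apply: commrB => //; apply: commr1.
  by rewrite subKr.
set x := a ^+ N.+1 in hp1; set y := (1 - a) ^+ N.+1 in hp2.
set u := x + y.
have eu : u = 1 + t * (p1 + p2).
  rewrite /u hp1 hp2 mulrDr.
  by rewrite addrACA [a + (1 - a)]addrC subrK -/t.
have [v [huv hvu]] : is_unit u.
  rewrite eu; apply: unit_1D_nil; apply: nilp_comm_mul; last by exists N.+1.
  by apply: commrD; apply: ctp.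
have cax : GRing.comm a x by apply: commrX.
have cay : GRing.comm a y by apply: commrX.
have cua : GRing.comm u a by apply: commr_sym; apply: commrD.
have cva := comm_inv huv hvu cua.
have xy0 : x * y = 0.
  by rewrite /x /y -exprMn_comm // mulrBr mulr1 -/t ht.
have yx0 : y * x = 0.
  by rewrite /x /y -exprMn_comm // mulrBl mul1r -/t ht.
have xu : x * u = x * x by rewrite /u mulrDr xy0 addr0.
have ux : u * x = x * x by rewrite /u mulrDl yx0 addr0.
have cux : GRing.comm u x by rewrite /GRing.comm ux xu.
have cvx := comm_inv huv hvu cux.
have xxv : x * x * v = x by rewrite -xu -mulrA huv mulr1.
exists (x * v), (a - x * v).
have cea : GRing.comm (x * v) a.
  by apply: commr_sym; apply: commrM => //; apply: commr_sym.
split.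
  by rewrite /is_idempotent mulrA -(mulrA x v x) cvx mulrA xxv.
split; last first.
  split; last by rewrite addrC subrK.
  by apply: commrB.
have eb : a - x * v = t * (((1 - a) ^+ N - a ^+ N) * v).
  have -> : a - x * v = (a * u - x) * v by rewrite mulrBl -mulrA huv mulr1.
  rewrite mulrA; congr (_ * _).
  have ay : a * y = t * (1 - a) ^+ N by rewrite /y exprS mulrA mulrBr mulr1.
  have ax : a * x - x = - (t * a ^+ N).
    by rewrite -{2}[x]mul1r -mulrBl -opprB mulNr /x exprS mulrA mulrBl mul1r -/t.
  rewrite /u mulrDr addrAC ax ay mulrBr addrC.
  done.
rewrite eb; apply: nilp_comm_mul; last by exists N.+1.
apply: commrM; first apply: commrB; apply: ctp => //.
- by apply: commr_sym; apply: commrX.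
- by apply: commr_sym; apply: commrX.
Qed.

Theorem lemma2p30 (R : pzRingType) :
  strongly_nil_clean R <-> (GWNC R /\ UU R).
Proof.
split.
  move=> hS; split.
    move=> a _; have [e [b [he [hb [_ ->]]]]] := hS a.
    by exists b, e; split => //; split => //; left; rewrite addrC.
  move=> u [w [huw hwu]].
  have [e [b [he [hb [heb hu]]]]] := hS u.
  have cub : GRing.comm u b.
    by rewrite /GRing.comm hu mulrDl mulrDr heb.
  have cwb := comm_inv huw hwu cub.
  have [f [hf1 hf2]] := unit_1B_nil (nilp_comm_mulr cwb hb).
  have ee : e = u * (1 - w * b) by rewrite mulrBr mulr1 mulrA huw mul1r hu addrK.
  have e1 : e = 1.
    have hef : e * (f * w) = 1 by rewrite ee -mulrA (mulrA (1 - w * b)) hf1 mul1r huw.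
    by rewrite -[e]mulr1 -hef mulrA he.
  by exists b; split => //; rewrite hu e1.
case=> hG hU a.
exact: lift (sq_nil hU hG a).
Qed.
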